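(* Let $k$ be a subfield of a field $f$ and let $G$ be a subgroup of the multiplicative group $f^*$ such that: $k^*\le G$; the quotient group $G/k^*$ is torsion; if $G/k^*$ has an element of order $4$, then $k$ contains a primitive $4$-th root of $1$; for every prime $p\in \pi(t(G))\cap\pi(G/k^* )$ the field $k$ contains a primitive $p$-th root of $1$; and $\operatorname{char}k\notin\pi(G/k^* )$. Let $g\in G\setminus k^*$ and let $t$ be the order of the image $gk^*$ of $g$ in $G/k^*$. Then $[k(g):k]=t$.
   Context: For a field $f$, $f^*$ denotes its multiplicative group. For an abelian group $A$, $t(A)$ denotes its torsion subgroup; for a torsion abelian group $X$, $\pi(X)$ denotes the set of primes dividing orders of elements of $X$. For a subfield $k$ and a subset $S$ of $f$, $k(S)$ is the subfield generated by $k$ and $S$, and $[f:k]$ is the dimension of $f$ over $k$. *)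

(* Defs.v *)
From HB Require Import structures.
From mathcomp Require Import all_boot all_order all_algebra.
Set Implicit Arguments. Unset Strict Implicit. Unset Printing Implicit Defensive.
Import GRing.Theory.
Local Open Scope ring_scope.

Definition is_subfield (f : fieldType) (S : f -> Prop) : Prop :=
  [/\ S 0, S 1,
      (forall x y, S x -> S y -> S (x - y)),
      (forall x y, S x -> S y -> S (x * y)) &
      (forall x, S x -> x != 0 -> S x^-1)].

Definition is_mult_subgroup (f : fieldType) (G : f -> Prop) : Prop :=
  [/\ (forall x, G x -> x != 0), G 1,
      (forall x y, G x -> G y -> G (x * y)) &
      (forall x, G x -> G x^-1)].

Definition adjoin (f : fieldType) (k : f -> Prop) (g : f) : f -> Prop :=
  fun x => forall L : f -> Prop,
    is_subfield L -> (forall y, k y -> L y) -> L g -> L x.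

Definition ext_dim (f : fieldType) (k L : f -> Prop) (n : nat) : Prop :=
  exists b : 'I_n -> f,
    [/\ (forall i, L (b i)),
        (forall c : 'I_n -> f, (forall i, k (c i)) ->
           \sum_(i < n) c i * b i = 0 -> forall i, c i = 0) &
        (forall x, L x -> exists c : 'I_n -> f,
           (forall i, k (c i)) /\ x = \sum_(i < n) c i * b i)].

(* for g in G (so g nonzero), the coset g k^* has order n in G/k^* *)
Definition coset_order (f : fieldType) (k : f -> Prop) (g : f) (n : nat) : Prop :=
  [/\ (0 < n)%N, k (g ^+ n) & forall m, (0 < m < n)%N -> ~ k (g ^+ m)].

Definition quot_torsion (f : fieldType) (k G : f -> Prop) : Prop :=
  forall g, G g -> exists n, coset_order k g n.

Definition in_pi_quot (f : fieldType) (k G : f -> Prop) (p : nat) : Prop :=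
  exists g n, [/\ G g, coset_order k g n & (p %| n)%N].

Definition in_pi_tors (f : fieldType) (G : f -> Prop) (p : nat) : Prop :=
  exists x n, [/\ G x, (0 < n)%N, n.-primitive_root x & (p %| n)%N].

Definition has_prim_root (f : fieldType) (k : f -> Prop) (n : nat) : Prop :=
  exists z, k z /\ n.-primitive_root z.

(* Main.v *)
Require Import Defs.
From mathcomp Require Import all_boot all_order all_algebra.
From Stdlib Require Import Classical.
From mathcomp Require Import ring zify.
Import GRing.Theory.
Local Open Scope ring_scope.
Set Implicit Arguments. Unset Strict Implicit. Unset Printing Implicit Defensive.

Section Basic.
Variable f : fieldType.
Variable S : f -> Prop.
Hypothesis HS : is_subfield S.

Lemma S0 : S 0. Proof. by case: HS. Qed.
Lemma S1 : S 1. Proof. by case: HS. Qed.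
Lemma SB x y : S x -> S y -> S (x - y). Proof. by case: HS => _ _ H _ _; apply: H. Qed.
Lemma SM x y : S x -> S y -> S (x * y). Proof. by case: HS => _ _ _ H _; apply: H. Qed.
Lemma SV x : S x -> S x^-1.
Proof.
have [-> _|nz Sx] := eqVneq x 0; first by rewrite invr0; exact: S0.
by case: HS => _ _ _ _ H; apply: H.
Qed.
Lemma SN x : S x -> S (- x). Proof. by move=> Sx; rewrite -sub0r; apply: SB => //; apply: S0. Qed.
Lemma SD x y : S x -> S y -> S (x + y).
Proof. by move=> Sx Sy; rewrite -[y]opprK; apply: SB => //; apply: SN. Qed.
Lemma SX x n : S x -> S (x ^+ n).
Proof. by move=> Sx; elim: n => [|n IH]; [rewrite expr0; exact: S1|rewrite exprS; exact: SM]. Qed.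
Lemma Sdiv x y : S x -> S y -> S (x / y). Proof. by move=> *; apply: SM => //; apply: SV. Qed.
Lemma Snat n : S n%:R.
Proof. elim: n => [|n IH]; first exact: S0. rewrite -addn1 natrD; apply: SD => //; exact: S1. Qed.
Lemma Ssum (I : Type) (r : seq I) (P : pred I) (F : I -> f) :
  (forall i, P i -> S (F i)) -> S (\sum_(i <- r | P i) F i).
Proof. by move=> H; apply: (big_ind S S0 SD). Qed.
Lemma Sprod (I : Type) (r : seq I) (P : pred I) (F : I -> f) :
  (forall i, P i -> S (F i)) -> S (\prod_(i <- r | P i) F i).
Proof. by move=> H; apply: (big_ind S S1 SM). Qed.
Lemma Ssign n : S ((-1) ^+ n). Proof. by apply: SX; apply: SN; apply: S1. Qed.

Definition polyS (P : {poly f}) := forall i, S P`_i.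

Lemma polyS0 : polyS 0. Proof. by move=> i; rewrite coef0; exact: S0. Qed.
Lemma polySC c : S c -> polyS c%:P.
Proof. by move=> Sc i; rewrite coefC; case: eqP => _ //; apply: S0. Qed.
Lemma polyS1 : polyS 1. Proof. by rewrite -polyC1; apply: polySC; apply: S1. Qed.
Lemma polySX : polyS 'X.
Proof. by move=> i; rewrite coefX; case: eqP => _; [apply: S1|apply: S0]. Qed.
Lemma polySXn n : polyS 'X^n.
Proof. by move=> i; rewrite coefXn; case: eqP => _; [apply: S1|apply: S0]. Qed.
Lemma polySD P Q : polyS P -> polyS Q -> polyS (P + Q).
Proof. by move=> HP HQ i; rewrite coefD; exact: SD. Qed.
Lemma polySB P Q : polyS P -> polyS Q -> polyS (P - Q).
Proof. by move=> HP HQ i; rewrite coefB; exact: SB. Qed.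
Lemma polySN P : polyS P -> polyS (- P).
Proof. by move=> HP i; rewrite coefN; exact: SN. Qed.
Lemma polySM P Q : polyS P -> polyS Q -> polyS (P * Q).
Proof. by move=> HP HQ i; rewrite coefM; apply: Ssum => j _; apply: SM. Qed.
Lemma polySZ c P : S c -> polyS P -> polyS (c *: P).
Proof. by move=> Sc HP i; rewrite coefZ; exact: SM. Qed.
Lemma polySXe P n : polyS P -> polyS (P ^+ n).
Proof. by move=> HP; elim: n => [|n IH]; [rewrite expr0; exact: polyS1|rewrite exprS; exact: polySM]. Qed.
Lemma polyS_horner P x : polyS P -> S x -> S P.[x].
Proof.
move=> HP Sx; rewrite horner_coef; apply: Ssum => i _; apply: SM => //; exact: SX.
Qed.

End Basic.

Lemma size_sub_lead (f : fieldType) (A B : {poly f}) :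
  A != 0 -> size B = size A -> lead_coef B = lead_coef A -> (size (A - B)%R < size A)%N.
Proof.
move=> nzA eS eL.
have sA : (0 < size A)%N by rewrite size_poly_gt0.
rewrite -(prednK sA) ltnS; apply/leq_sizeP => j hj.
rewrite coefB; case: (ltngtP j (size A).-1) => hj'.
- by move: hj; rewrite leqNgt hj'.
- have hj2 : (size A <= j)%N by rewrite -(prednK sA).
  by rewrite !nth_default ?subrr // eS.
- by rewrite hj' -eS -!lead_coefE eS eL subrr.
Qed.

Section Div.
Variable f : fieldType.
Variable S : f -> Prop.
Hypothesis HS : is_subfield S.

Lemma divS P Q : polyS S P -> polyS S Q -> Q \is monic ->
  exists D Rm, [/\ polyS S D, polyS S Rm, P = D * Q + Rm & (size Rm < size Q)%N].
Proof.
move=> HP HQ mQ.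
have sQ : (0 < size Q)%N by rewrite size_poly_gt0 monic_neq0.
move: {2}(size P) (leqnn (size P)) => n; elim: n P HP => [|n IH] P HP sP.
  exists 0, P; split => //; first exact: polyS0.
    by rewrite mul0r add0r.
  by apply: leq_ltn_trans sQ.
case: (ltnP (size P) (size Q)) => hPQ.
  exists 0, P; split => //; first exact: polyS0.
  by rewrite mul0r add0r.
have nzP : P != 0 by rewrite -size_poly_gt0 (leq_trans sQ).
set d := (size P - size Q)%N.
set M := lead_coef P *: ('X^d * Q).
have lP : lead_coef P != 0 by rewrite lead_coef_eq0.
have sM : size M = size P.
  rewrite /M size_scale // mulrC size_mulXn ?monic_neq0 //.
  by rewrite /d subnK.
have lM : lead_coef M = lead_coef P.
  by rewrite /M lead_coefZ lead_coef_Mmonic ?lead_coefXn ?mulr1.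
have HP' : polyS S (P - M).
  apply: polySB => //; apply: polySZ => //.
    by rewrite lead_coefE; apply: HP.
  by apply: polySM => //; apply: polySXn.
have := size_sub_lead nzP sM lM => sP'.
have [D [Rm [HD HRm eq sRm]]] := IH _ HP' (leq_trans (ltnSn _) (leq_trans sP' sP)).
exists (D + lead_coef P *: 'X^d), Rm; split => //.
  apply: polySD => //; apply: polySZ => //; last exact: polySXn.
  by rewrite lead_coefE; apply: HP.
rewrite mulrDl -addrA (addrC _ Rm) addrA -eq /M -scalerAl.
by rewrite subrK.
Qed.

End Div.

Lemma min_size (f : fieldType) (Pr : {poly f} -> Prop) A :
  Pr A -> exists B, Pr B /\ forall C, Pr C -> (size B <= size C)%N.
Proof.
move: {2}(size A) (leqnn (size A)) => n; elim: n A => [|n IH] A sA HA.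
  exists A; split => // C _; by apply: leq_trans sA _.
case: (classic (exists C, Pr C /\ (size C < size A)%N)) => [[C [HC sC]]|H].
  by apply: (IH C) => //; rewrite -ltnS (leq_trans sC).
exists A; split => // C HC; rewrite leqNgt; apply/negP => sC; apply: H.
by exists C.
Qed.

Lemma det_exp (R : comNzRingType) n (A : 'M[R]_n) k : \det (A ^+ k) = \det A ^+ k.
Proof.
elim: k => [|k IH]; first by rewrite !expr0 det1.
by rewrite !exprS -mulmxE det_mulmx IH.
Qed.

Section Mx.
Variable f : fieldType.
Variable S : f -> Prop.
Hypothesis HS : is_subfield S.

Definition mxS m n (M : 'M[f]_(m, n)) := forall i j, S (M i j).

Lemma mxS_mul m n p (A : 'M[f]_(m, n)) (B : 'M[f]_(n, p)) : mxS A -> mxS B -> mxS (A *m B).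
Proof. by move=> HA HB i j; rewrite mxE; apply: Ssum => // k _; apply: SM. Qed.
Lemma mxS_add m n (A B : 'M[f]_(m, n)) : mxS A -> mxS B -> mxS (A + B).
Proof. by move=> HA HB i j; rewrite mxE; apply: SD. Qed.
Lemma mxS_scalar n c : S c -> mxS (c%:M : 'M[f]_n).
Proof.
move=> Sc i j; rewrite mxE; case: (i == j) => /=; first by rewrite mulr1n.
by rewrite mulr0n; apply: S0.
Qed.

Lemma mxS_horner n (C : 'M[f]_n.+1) P : mxS C -> polyS S P -> mxS (horner_mx C P).
Proof.
move=> HC; elim/poly_ind: P => [|P c IH] HP.
  by rewrite rmorph0; move=> i j; rewrite mxE; apply: S0.
have Sc : S c by move: (HP 0%N); rewrite coefD coefC coefMX /= add0r.
have HP' : polyS S P by move=> i; move: (HP i.+1); rewrite coefD coefC coefMX /= addr0.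
rewrite rmorphD rmorphM /= horner_mx_X horner_mx_C.
by apply: mxS_add; [rewrite -mulmxE; apply: mxS_mul => //; apply: IH | apply: mxS_scalar].
Qed.

Lemma mxS_det n (A : 'M[f]_n) : mxS A -> S (\det A).
Proof.
move=> HA; rewrite /determinant; apply: (big_ind S (S0 HS) (SD HS)) => s _.
by apply: (SM HS); [apply: (Ssign HS) | apply: (Sprod HS) => i _].
Qed.

Lemma companionS n (Q : {poly f}) : Q \is monic -> polyS S Q -> size Q = n.+2 ->
  exists C : 'M[f]_n.+1, char_poly C = Q /\ mxS C.
Proof.
move=> mQ HQ sQ.
have := companionmxK mQ.
have H : mxS (companionmx Q).
  move=> i j; rewrite mxE; case: ifP => _; first by apply: SN.
  exact: Snat.
move: (companionmx Q) H; rewrite sQ /= => C HC HcC.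
by exists C.
Qed.

End Mx.

Definition Ind (f : fieldType) (S : f -> Prop) (x : f) (n : nat) :=
  forall R, polyS S R -> (size R <= n)%N -> R.[x] = 0 -> R = 0.

Section Prime.
Variable f : fieldType.
Variable S : f -> Prop.
Hypothesis HS : is_subfield S.

Lemma minpolyS x R0 : polyS S R0 -> R0 != 0 -> R0.[x] = 0 ->
  exists Q, [/\ Q \is monic, polyS S Q, Q.[x] = 0, (size Q <= size R0)%N &
     forall C, polyS S C -> C != 0 -> C.[x] = 0 -> (size Q <= size C)%N].
Proof.
move=> HR0 nz0 R0x.
have [B [[HB [nzB Bx]] minB]] :=
  @min_size f (fun A => polyS S A /\ A != 0 /\ A.[x] = 0) R0 (conj HR0 (conj nz0 R0x)).
have lB : lead_coef B != 0 by rewrite lead_coef_eq0.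
exists ((lead_coef B)^-1 *: B); split.
- by apply/monicP; rewrite lead_coefZ mulVf.
- apply: polySZ => //; apply: SV => //; rewrite lead_coefE; apply: HB.
- by rewrite hornerZ Bx mulr0.
- by rewrite size_scale ?invr_eq0 //; apply: minB.
- by move=> C HC nzC Cx; rewrite size_scale ?invr_eq0 //; apply: minB.
Qed.

Lemma PL p x y : prime p -> S y -> y != 0 -> x ^+ p = y -> ~ Ind S x p ->
  exists c, S c /\ y = c ^+ p.
Proof.
move=> pp Sy y0 xp nInd.
have [R0 [HR0 [nzR0 [R0x sR0]]]] :
    exists R, [/\ polyS S R, R != 0, R.[x] = 0 & (size R <= p)%N].
  apply: NNPP => H; apply: nInd => R HR sR Rx; apply: NNPP => nz; apply: H.
  by exists R; split => //; apply/eqP.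
have [Q [mQ HQ Qx sQR minQ]] := minpolyS HR0 nzR0 R0x.
have nzQ : Q != 0 by apply: monic_neq0.
have sQ2 : (1 < size Q)%N.
  rewrite ltnNge; apply/negP => /size1_polyC eQ.
  move: Qx; rewrite eQ hornerC => Q0; move: eQ; rewrite Q0 => eQ.
  by move: nzQ; rewrite eQ eqxx.
have [n sQ] : exists n, size Q = n.+2.
  by exists (size Q).-2; case: (size Q) sQ2 => [|[|m]].
have ltnp : (n.+1 < p)%N by rewrite -ltnS -sQ ltnS (leq_trans sQR).
have HXp : polyS S ('X^p - y%:P) by apply: polySB => //; [apply: polySXn | apply: polySC].
have [D [Rm [HD HRm eD sRm]]] := divS HS HXp HQ mQ.
have Rmx : Rm.[x] = 0.
  have := congr1 (horner^~ x) eD.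
  by rewrite !hornerE Qx mulr0 add0r xp subrr => <-.
have Rm0 : Rm = 0.
  apply: NNPP => /eqP nzRm; have := minQ _ HRm nzRm Rmx.
  by rewrite leqNgt sRm.
have [C [chC HC]] := companionS HS mQ HQ sQ.
have CH : horner_mx C Q = 0 by rewrite -chC Cayley_Hamilton.
have Cp : C ^+ p = y%:M.
  have := congr1 (horner_mx C) eD.
  rewrite Rm0 addr0 rmorphM /= CH mulr0 rmorphB /= rmorphXn /= horner_mx_X horner_mx_C.
  by move/eqP; rewrite subr_eq0 => /eqP.
set b := \det C.
have bp : b ^+ p = y ^+ n.+1 by rewrite /b -det_exp Cp det_scalar.
have Sb : S b.
  have := char_poly_det C; rewrite chC => e.
  have -> : b = (-1) ^+ n.+1 * Q`_0 by rewrite e signrMK.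
  by apply: (SM HS); [apply: (Ssign HS) | apply: HQ].
have b0 : b != 0.
  apply/negP => /eqP b0; move: bp; rewrite b0 expr0n /=.
  have -> : (p == 0%N) = false by apply/negP => /eqP p0; move: pp; rewrite p0.
  by move/eqP; rewrite eq_sym expf_eq0 (negPf y0) andbF.
have [a _ ha] := Bezoutl n.+1 (prime_gt0 pp).
have cop : coprime p n.+1.
  rewrite prime_coprime //; apply/negP => /(dvdn_leq (ltn0Sn _)).
  by rewrite leqNgt ltnp.
move: ha; rewrite (eqP cop) => /dvdnP [v ev].
exists (y ^+ v / b ^+ a); split.
  by apply: Sdiv => //; apply: SX.
rewrite expr_div_n -!exprM (mulnC a) (exprM b) bp -exprM -ev exprD expr1.
by rewrite (mulnC n.+1) mulfK // expf_neq0.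
Qed.

End Prime.

Definition Padj (f : fieldType) (S : f -> Prop) (x : f) :=
  fun z => exists R, polyS S R /\ z = R.[x].

Section Adj.
Variable f : fieldType.
Variable S : f -> Prop.
Hypothesis HS : is_subfield S.
Variables (x y : f) (n : nat).
Hypotheses (n0 : (0 < n)%N) (Sy : S y) (xn : x ^+ n = y).

Let Xn := 'X^n - y%:P.
Let mXn : Xn \is monic. Proof. by apply: monicXnsubC. Qed.
Let HXn : polyS S Xn. Proof. by apply: polySB => //; [apply: polySXn | apply: polySC]. Qed.
Let Xnx : Xn.[x] = 0. Proof. by rewrite /Xn !hornerE xn subrr. Qed.
Let sXn : size Xn = n.+1. Proof. by rewrite size_XnsubC. Qed.

Lemma Padj_red z : Padj S x z -> exists R, [/\ polyS S R, (size R <= n)%N & z = R.[x]].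
Proof.
move=> [R [HR ->]].
have [D [Rm [HD HRm eD sRm]]] := divS HS HR HXn mXn.
exists Rm; split => //; first by rewrite -ltnS -sXn.
by rewrite eD hornerD hornerM Xnx mulr0 add0r.
Qed.

Hypothesis Indx : Ind S x n.

Lemma Padj_inv z : Padj S x z -> z != 0 -> Padj S x z^-1.
Proof.
move=> /Padj_red [R [HR sR ez]] z0.
have nzR : R != 0 by apply/eqP => R0; move: z0; rewrite ez R0 horner0 eqxx.
pose Pr A := [/\ polyS S A, A != 0 &
   exists U V, [/\ polyS S U, polyS S V & A = U * R + V * Xn]].
have PrR : Pr R.
  split => //; exists 1, 0; split; [exact: polyS1 | exact: polyS0|].
  by rewrite mul1r mul0r addr0.
have [B [[HB nzB [U [V [HU HV eB]]]] minB]] := min_size PrR.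
have lB : lead_coef B != 0 by rewrite lead_coef_eq0.
set l := (lead_coef B)^-1.
have Sl : S l by apply: SV => //; rewrite lead_coefE; apply: HB.
set A := l *: B.
have mA : A \is monic by apply/monicP; rewrite lead_coefZ mulVf.
have HA : polyS S A by apply: polySZ.
have sA : size A = size B by rewrite size_scale // invr_eq0.
have eA : A = (l *: U) * R + (l *: V) * Xn by rewrite /A eB scalerDr -!scalerAl.
have HU' : polyS S (l *: U) by apply: polySZ.
have HV' : polyS S (l *: V) by apply: polySZ.
have divA : forall P (a b : {poly f}), polyS S P -> polyS S a -> polyS S b ->
    P = a * R + b * Xn -> exists D, polyS S D /\ P = D * A.
  move=> P a b HP Ha Hb eP.
  have [D [Rm [HD HRm eD sRm]]] := divS HS HP HA mA.
  exists D; split => //.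
  have : Rm = 0.
    apply: NNPP => /eqP nzRm.
    have : Pr Rm.
      split => //; exists (a - D * (l *: U)), (b - D * (l *: V)); split.
      - by apply: polySB => //; apply: polySM.
      - by apply: polySB => //; apply: polySM.
      - have -> : Rm = P - D * A by rewrite eD addrC addKr.
        by rewrite eP eA; ring.
    by move/minB; rewrite leqNgt -sA sRm.
  by move=> Rm0; rewrite eD Rm0 addr0.
have [D1 [HD1 eR]] : exists D, polyS S D /\ R = D * A.
  apply: (divA R 1 0) => //; [exact: polyS1 | exact: polyS0 |].
  by rewrite mul1r mul0r addr0.
have [D2 [HD2 eX]] : exists D, polyS S D /\ Xn = D * A.
  apply: (divA Xn 0 1) => //; [exact: polyS0 | exact: polyS1 |].
  by rewrite mul1r mul0r add0r.
case: (leqP (size A) 1) => sA1.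
  have A1 : A = 1.
    move: (size1_polyC sA1) => e; move: mA; rewrite e monicE lead_coefC => /eqP ->.
    by rewrite polyC1.
  exists (l *: U); split => //.
  have := congr1 (horner^~ x) eA; rewrite A1 /= hornerD !hornerM Xnx mulr0 addr0 -ez hornerC.
  move=> e1; apply: (mulfI z0); rewrite mulfV //.
  by rewrite e1 mulrC.
exfalso.
have Ax : A.[x] != 0.
  by apply/eqP => Ax; move: z0; rewrite ez eR hornerM Ax mulr0 eqxx.
have nzD2 : D2 != 0.
  by apply/eqP => D0; move: (monic_neq0 mXn); rewrite eX D0 mul0r eqxx.
have D2x : D2.[x] = 0.
  have := congr1 (horner^~ x) eX; rewrite Xnx hornerM => /esym/eqP.
  by rewrite mulf_eq0 (negPf Ax) orbF => /eqP.
have sD2 : (size D2 <= n)%N.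
  have := congr1 (fun P : {poly f} => size P) eX; rewrite sXn size_Mmonic // => e.
  move: e sA1; case: (size A) => [|[|m]] // e _.
  move: e; rewrite !addnS /= => /eqP; rewrite eqSS => /eqP e.
  by rewrite e leq_addr.
by move: nzD2; rewrite (Indx HD2 sD2 D2x) eqxx.
Qed.

Lemma Padj_field : is_subfield (Padj S x).
Proof.
split.
- by exists 0; split; [exact: polyS0 | rewrite horner0].
- by exists 1; split; [exact: polyS1 | rewrite hornerC].
- move=> a b [Ra [Ha ->]] [Rb [Hb ->]]; exists (Ra - Rb); split.
    exact: polySB.
  by rewrite hornerD hornerN.
- move=> a b [Ra [Ha ->]] [Rb [Hb ->]]; exists (Ra * Rb); split.
    exact: polySM.
  by rewrite hornerM.
- exact: Padj_inv.
Qed.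

End Adj.

Lemma sum_split (f : fieldType) (F : nat -> f) s p :
  \sum_(i < s * p) F i = \sum_(j < s) \sum_(r < p) F (j * p + r)%N.
Proof.
elim: s => [|s IH]; first by rewrite mul0n !big_ord0.
rewrite big_ord_recr /= -IH mulSnr big_split_ord /=.
congr (_ + _); apply: eq_bigr => i _; by rewrite addnC.
Qed.

Section Norm.
Variable f : fieldType.
Variable k : f -> Prop.
Hypothesis Hk : is_subfield k.
Variables (h a : f) (s' : nat) (p : nat).
Let s := s'.+1.
Hypotheses (ka : k a) (hs : h ^+ s = a) (Indh : Ind k h s).

Lemma NL c : Padj k h c -> c ^+ p = h ->
  exists N, k N /\ N ^+ p = (-1) ^+ s.+1 * a.
Proof.
move=> [R [HR ec]] cp.
set Xn := 'X^s - a%:P.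
have mXn : Xn \is monic by apply: monicXnsubC.
have HXn : polyS k Xn by apply: polySB => //; [apply: polySXn | apply: polySC].
have Xnh : Xn.[h] = 0 by rewrite /Xn !hornerE hs subrr.
have sXn : size Xn = s'.+2 by rewrite size_XnsubC.
have [C [chC HC]] := companionS Hk mXn HXn sXn.
have CH : horner_mx C Xn = 0 by rewrite -chC Cayley_Hamilton.
have HZ : forall P, polyS k P -> P.[h] = 0 -> horner_mx C P = 0.
  move=> P HP Ph.
  have [D [Rm [HD HRm eD sRm]]] := divS Hk HP HXn mXn.
  have Rm0 : Rm = 0.
    apply: Indh => //; first by rewrite -ltnS -sXn.
    by move: Ph; rewrite eD hornerD hornerM Xnh mulr0 add0r.
  by rewrite eD Rm0 addr0 rmorphM /= CH mulr0.
set M := horner_mx C R.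
have Mp : M ^+ p = C.
  have := HZ (R ^+ p - 'X) (polySB Hk (polySXe Hk p HR) (polySX Hk)).
  rewrite hornerD hornerN horner_exp hornerX -ec cp subrr => /(_ erefl).
  rewrite rmorphB /= rmorphXn /= horner_mx_X => /eqP; rewrite subr_eq0 => /eqP.
  done.
exists (\det M); split.
  by apply: (mxS_det Hk); apply: (mxS_horner Hk).
rewrite -det_exp Mp.
have := char_poly_det C; rewrite chC /Xn coefB coefXn coefC /= sub0r => e.
rewrite -[\det C](signrMK s) -e exprS; ring.
Qed.

End Norm.

Lemma CL (f : fieldType) (k : f -> Prop) (g : f) (p s : nat) :
  is_subfield k -> Ind k (g ^+ p) s -> Ind (Padj k (g ^+ p)) g p -> Ind k g (s * p).
Proof.
move=> Hk Indh IndK R HR sR Rg.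
set h := g ^+ p.
pose Rr r := \poly_(j < s) R`_(j * p + r).
have HRr r : polyS k (Rr r).
  by move=> j; rewrite coef_poly; case: ifP => _ //; exact: S0.
pose W := \poly_(r < p) (Rr r).[h].
have HW : polyS (Padj k h) W.
  move=> r; rewrite coef_poly; case: ifP => _.
    by exists (Rr r); split.
  by exists 0; split; [exact: polyS0 | rewrite horner0].
have Wg : W.[g] = 0.
  rewrite -Rg (horner_coef_wide _ sR) (sum_split (fun i => R`_i * g ^+ i)) horner_poly.
  rewrite exchange_big /=; apply: eq_bigr => r _.
  rewrite horner_poly mulr_suml; apply: eq_bigr => j _.
  by rewrite exprD mulnC exprM mulrA.
have W0 := IndK W HW (size_poly _ _) Wg.
have Rr0 r : (r < p)%N -> Rr r = 0.
  move=> rp; apply: Indh => //; first exact: size_poly.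
  by have := congr1 (fun P : {poly f} => P`_r) W0; rewrite coef_poly rp coef0.
apply/polyP => i; rewrite coef0.
case: (ltnP i (s * p)) => hi; last by rewrite nth_default // (leq_trans sR hi).
have p0 : (0 < p)%N by rewrite lt0n; apply/eqP => p0; move: hi; rewrite p0 muln0.
have := congr1 (fun P : {poly f} => P`_(i %/ p)) (Rr0 _ (ltn_pmod i p0)).
rewrite coef_poly coef0 ltn_divLR // hi -divn_eq; done.
Qed.

Section Main.
Variable f : fieldType.
Variables (k G : f -> Prop).
Hypotheses (Hk : is_subfield k) (HG : is_mult_subgroup G)
  (kG : forall x, k x -> x != 0 -> G x)
  (H4 : (exists h, G h /\ coset_order k h 4) -> has_prim_root k 4)
  (Hpi : forall p, prime p -> in_pi_tors G p -> in_pi_quot k G p -> has_prim_root k p).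

Lemma G0 x : G x -> x != 0. Proof. by case: HG => H _ _ _; apply: H. Qed.
Lemma GM x y : G x -> G y -> G (x * y). Proof. by case: HG => _ _ H _; apply: H. Qed.
Lemma GV x : G x -> G x^-1. Proof. by case: HG => _ _ _ H; apply: H. Qed.
Lemma GX x n : G x -> G (x ^+ n).
Proof.
move=> Gx; elim: n => [|n IH]; first by rewrite expr0; case: HG.
by rewrite exprS; apply: GM.
Qed.

Lemma kpow g t : G g -> coset_order k g t -> forall m, k (g ^+ m) <-> (t %| m)%N.
Proof.
move=> Gg [t0 kt mint] m; split => [km|/dvdnP [q ->]]; last first.
  by rewrite mulnC exprM; apply: SX.
have g0 := G0 Gg.
have e : g ^+ (m %% t)%N = g ^+ m / (g ^+ t) ^+ (m %/ t)%N.
  rewrite {2}(divn_eq m t) exprD -exprM mulnC mulrC mulKf //.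
  by rewrite expf_neq0 // expf_neq0.
have : k (g ^+ (m %% t)%N) by rewrite e; apply: Sdiv => //; apply: SX.
case: (posnP (m %% t)%N) => [r0 _|r0 kr].
  by apply/dvdnP; exists (m %/ t)%N; rewrite {1}(divn_eq m t) r0 addn0.
by exfalso; apply: (mint (m %% t)%N); rewrite // r0 ltn_pmod.
Qed.

Lemma lemA t g q d : G g -> ~ k g -> coset_order k g t -> prime q -> (q %| t)%N ->
  k d -> g ^+ t = d ^+ q -> False.
Proof.
move=> Gg nkg co pq qt kd e.
have [t0 _ _] := co.
have g0 := G0 Gg.
have q0 := prime_gt0 pq.
have d0 : d != 0.
  apply/eqP => d0; move: e; rewrite d0 expr0n eqn0Ngt q0 /= => /eqP.
  by rewrite expf_eq0 (negPf g0) andbF.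
set w := g ^+ (t %/ q)%N / d.
have wq : w ^+ q = 1 by rewrite /w expr_div_n -exprM divnK // e divff // expf_neq0.
have ltq : (0 < t %/ q < t)%N.
  by rewrite divn_gt0 // (dvdn_leq t0 qt) ltn_Pdiv // prime_gt1.
have nkw : ~ k w.
  move=> kw; have : k (g ^+ (t %/ q)%N).
    have -> : g ^+ (t %/ q)%N = w * d by rewrite /w divfK.
    exact: SM.
  move/(kpow Gg co) => /(dvdn_leq _) H.
  by move: ltq => /andP [l1 l2]; move: (H l1); rewrite leqNgt l2.
have Gw : G w by apply: GM; [apply: GX | apply: GV; apply: kG].
have prw : q.-primitive_root w.
  have [m pm mq] := prim_order_exists q0 wq.
  case/primeP: pq => _ /(_ m mq) /orP [/eqP m1|/eqP mq'].
    exfalso; apply: nkw; move: (prim_expr_order pm); rewrite m1 expr1 => ->.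
    exact: S1.
  by rewrite -mq'.
have [z [kz pz]] : has_prim_root k q.
  apply: Hpi => //.
    by exists w, q; split.
  by exists g, t; split.
have [i ei] := prim_rootP pz wq.
by apply: nkw; rewrite ei; apply: SX.
Qed.

Lemma lemB t g d : G g -> ~ k g -> coset_order k g t -> (4 %| t)%N ->
  k d -> - g ^+ t = d ^+ 2 -> False.
Proof.
move=> Gg nkg co dt kd e.
have [t0 kt _] := co.
have g0 := G0 Gg.
have d0 : d != 0.
  apply/eqP => d0; move: e; rewrite d0 expr0n /= => /eqP.
  by rewrite oppr_eq0 expf_eq0 (negPf g0) andbF.
have [u eu] : exists u, t = (u * 4)%N by apply/dvdnP.
have u0 : (0 < u)%N by move: t0; rewrite eu; lia.
have co4 : coset_order k (g ^+ u) 4.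
  split => //; first by rewrite -exprM -eu.
  move=> m /andP [m0 m4]; rewrite -exprM => /(kpow Gg co).
  rewrite eu => /(dvdn_leq _) H.
  have : (0 < u * m)%N by rewrite muln_gt0 u0.
  by move/H; rewrite leq_pmul2l //; rewrite leqNgt m4.
have [z [kz pz]] := H4 (ex_intro _ (g ^+ u) (conj (GX _ Gg) co4)).
have z2 : z ^+ 2 = -1.
  have z4 := prim_expr_order pz.
  have z2n : z ^+ 2 != 1 by rewrite -(prim_order_dvd pz).
  have : (z ^+ 2 - 1) * (z ^+ 2 + 1) = 0.
    have E : (z ^+ 2 - 1) * (z ^+ 2 + 1) = z ^+ 4 - 1 by ring.
    by rewrite E z4 subrr.
  move/eqP; rewrite mulf_eq0 subr_eq0 (negPf z2n) /= addr_eq0 => /eqP //.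
set w := g ^+ (u * 2)%N / d.
have w2 : w ^+ 2 = -1.
  rewrite /w expr_div_n -exprM -mulnA /= -eu -e.
  by rewrite invrN mulrN divff // expf_neq0.
have E0 : (w - z) * (w + z) = 0.
  have E : (w - z) * (w + z) = w ^+ 2 - z ^+ 2 by ring.
  by rewrite E w2 z2 subrr.
have kw : k w.
  move/eqP: E0; rewrite mulf_eq0 subr_eq0 addr_eq0 => /orP [/eqP -> //|/eqP ->].
  exact: SN.
have : k (g ^+ (u * 2)%N).
  have -> : g ^+ (u * 2)%N = w * d by rewrite /w divfK.
  exact: SM.
move/(kpow Gg co); rewrite eu => /(dvdn_leq _) H.
have : (0 < u * 2)%N by rewrite muln_gt0 u0.
by move/H; rewrite leq_pmul2l.
Qed.

Lemma mainInd t : forall g, G g -> ~ k g -> coset_order k g t -> Ind k g t.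
Proof.
elim/ltn_ind: t => t IH g Gg nkg co.
have [t0 kt mint] := co.
have g0 := G0 Gg.
have t1 : (1 < t)%N.
  case: t t0 kt {IH mint co} => [|[|t']] //; by rewrite expr1.
set p := pdiv t.
have pp : prime p by apply: pdiv_prime.
have pt : (p %| t)%N by apply: pdiv_dvd.
have p0 := prime_gt0 pp.
set s := (t %/ p)%N.
have ets : t = (s * p)%N by rewrite divnK.
have s0 : (0 < s)%N by rewrite divn_gt0 // dvdn_leq.
set a := g ^+ t.
have a0 : a != 0 by rewrite expf_neq0.
case: (ltnP 1 s) => s1; last first.
  have es : s = 1%N by apply/eqP; rewrite eqn_leq s1 s0.
  have etp : t = p by rewrite ets es mul1n.
  apply: NNPP => nI.
  have nI' : ~ Ind k g p by rewrite -etp.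
  have xp : g ^+ p = a by rewrite /a etp.
  have [c [kc ac]] := PL Hk pp kt a0 xp nI'.
  exact: (lemA Gg nkg co pp pt kc ac).
set h := g ^+ p.
have Gh : G h by apply: GX.
have ltpt : (p < t)%N by rewrite ets -{1}(mul1n p) ltn_pmul2r.
have nkh : ~ k h.
  move/(kpow Gg co) => /(dvdn_leq p0); by rewrite leqNgt ltpt.
have coh : coset_order k h s.
  split => //; first by rewrite /h -exprM mulnC -ets.
  move=> j /andP [j0 js]; rewrite /h -exprM => /(kpow Gg co).
  rewrite ets mulnC dvdn_pmul2l // => /(dvdn_leq j0); by rewrite leqNgt js.
have lst : (s < t)%N by rewrite ets -{1}(muln1 s) ltn_pmul2l // prime_gt1.
have Indh := IH s lst h Gh nkh coh.
have hs : h ^+ s = a by rewrite /h -exprM mulnC -ets.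
have HK : is_subfield (Padj k h) by apply: (Padj_field Hk s0 kt hs).
have Kh : Padj k h h.
  by exists 'X; split; [apply: polySX | rewrite hornerX].
rewrite ets; apply: CL => //.
apply: NNPP => nI.
have [c [Kc hc]] := PL HK pp Kh (G0 Gh) (erefl _) nI.
have [s' es'] : exists s', s = s'.+1 by exists s.-1; rewrite prednK.
have Indh' : Ind k h s'.+1 by rewrite -es'.
have hs' : h ^+ s'.+1 = a by rewrite -es'.
have [N [kN Np]] := NL Hk kt hs' Indh' Kc (esym hc).
rewrite -es' in Np.
case: (even_prime pp) => [p2|podd].
- case/boolP: (odd s) => so.
  + apply: (lemA Gg nkg co pp pt kN).
    by rewrite Np -signr_odd /= so /= expr0 mul1r.
  + apply: (lemB Gg nkg co _ kN).
      by rewrite ets p2 -[4%N]/(2 * 2)%N dvdn_pmul2r // dvdn2.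
    rewrite -p2 Np -signr_odd /= (negPf so) /= expr1 mulN1r.
    done.
- apply: (lemA Gg nkg co pp pt (SM Hk (Ssign Hk s.+1) kN)).
  rewrite exprMn Np.
  have -> : ((-1) ^+ s.+1) ^+ p = (-1) ^+ s.+1 :> f.
    by rewrite -exprM -signr_odd oddM podd andbT signr_odd.
  by rewrite signrMK.
Qed.

End Main.

Unset Implicit Arguments. Set Strict Implicit. Set Printing Implicit Defensive.

Theorem lemma1p1 (f : fieldType) (k G : f -> Prop) (g : f) (t : nat) :
  is_subfield k ->
  is_mult_subgroup G ->
  (forall x, k x -> x != 0 -> G x) ->
  quot_torsion k G ->
  ((exists h, G h /\ coset_order k h 4) -> has_prim_root k 4) ->
  (forall p, prime p -> in_pi_tors G p -> in_pi_quot k G p -> has_prim_root k p) ->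
  (forall p, p \in [pchar f] -> ~ in_pi_quot k G p) ->
  G g -> ~ k g ->
  coset_order k g t ->
  ext_dim k (adjoin k g) t.
Proof.
move=> Hk HG kG _ H4 Hpi _ Gg nkg co.
have Indg := mainInd Hk HG kG H4 Hpi Gg nkg co.
have [t0 kt _] := co.
exists (fun i : 'I_t => g ^+ i); split.
- move=> i L HL kL Lg; exact: SX HL _ _ Lg.
- destruct t as [|t']; first by [].
  move=> c kc e i.
  pose R := \poly_(j < t'.+1) c (inord j).
  have HR : polyS k R.
    move=> j; rewrite coef_poly; case: ifP => _; [exact: kc | exact: S0].
  have R0 : R = 0.
    apply: Indg => //; first exact: size_poly.
    rewrite horner_poly -[in RHS]e; apply: eq_bigr => j _; by rewrite inord_val.
  have := congr1 (fun P : {poly f} => P`_i) R0.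
  by rewrite coef_poly ltn_ord inord_val coef0.
- move=> x Hx.
  have HT : is_subfield (Padj k g) := Padj_field Hk t0 kt (erefl _) Indg.
  have Tx : Padj k g x.
    apply: Hx => //.
      by move=> y ky; exists y%:P; split; [apply: polySC | rewrite hornerC].
    by exists 'X; split; [apply: polySX | rewrite hornerX].
  have [R [HR sR ->]] := Padj_red Hk t0 kt (erefl _) Tx.
  exists (fun i : 'I_t => R`_i); split => //.
  exact: horner_coef_wide.
Qed.
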